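(* Let $G$ be a graph, $\ell\ge 1$, and let $B\subseteq V(G)$ be an $(\ell-1)$-leaky forcing set of $G$. If $L$ is a set of $k\ge \ell$ specified leaks, then $|L-B^{[\infty]}_L|\le k-\ell$, where for $S\subseteq V(G)$, $L-S=\{x\to y\in L: x\notin S\}$.
   Context: All graphs are finite, simple and undirected. Zero forcing: a blue vertex $u$ with exactly one white neighbor $w$ may force $w$ (color it blue), written $u\to w$. A vertex leak is a vertex not allowed to perform any force; $B$ is an $\ell$-leaky forcing set if for every set of at most $\ell$ vertex leaks, exhaustively applying the forcing rule from initial blue set $B$ colors all of $V(G)$ blue (a $0$-leaky forcing set is a zero forcing set). A specified leak is an ordered pair $x\to y$ indicating that $x$ (the tail) is prohibited from forcing $y$ (the head). For a set $L$ of specified leaks, $B^{[\infty]}_L$ is the set of blue vertices obtained from $B$ after exhaustively applying the forcing rule while never performing a force in $L$ (independent of the order of forces). *)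

(* Defs.v *)
From mathcomp Require Import all_boot.
Set Implicit Arguments. Unset Strict Implicit. Unset Printing Implicit Defensive.

Definition simple_graph (T : finType) (e : rel T) : Prop :=
  symmetric e /\ irreflexive e.

Definition force_step (T : finType) (e : rel T) (allowed : T -> T -> bool)
    (S : {set T}) : {set T} :=
  S :|: [set w | [exists u, [&& u \in S, e u w, w \notin S, allowed u w &
                   [forall v, (e u v && (v != w)) ==> (v \in S)]]]].

(* Exhaustive application of the (restricted) forcing rule; #|T| rounds
   suffice since each non-final round adds a vertex. *)
Definition closure (T : finType) (e : rel T) (allowed : T -> T -> bool)
    (B : {set T}) : {set T} :=
  iter #|T| (force_step e allowed) B.

(* B^{[oo]}_L for a set L of specified leaks (ordered pairs (x,y) = x -> y). *)
Definition spec_closure (T : finType) (e : rel T) (L : {set T * T})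
    (B : {set T}) : {set T} :=
  closure e (fun u w => (u, w) \notin L) B.

Definition leaky_forcing_set (T : finType) (e : rel T) (l : nat)
    (B : {set T}) : Prop :=
  forall X : {set T}, #|X| <= l ->
    closure e (fun u _ => u \notin X) B = [set: T].

Definition leaks_minus (T : finType) (L : {set T * T}) (S : {set T})
    : {set T * T} :=
  [set p in L | p.1 \notin S].

(* Main.v *)
Require Import Defs.
From mathcomp Require Import all_boot.
From mathcomp Require Import zify.

Lemma step_ext (T : finType) (e : rel T) a (S : {set T}) :
  S \subset force_step e a S.
Proof. exact: subsetUl. Qed.

Lemma closure_fix (T : finType) (e : rel T) a (B : {set T}) :
  force_step e a (Defs.closure e a B) = Defs.closure e a B.
Proof.
rewrite /Defs.closure; set f := force_step e a; set n := #|T|.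
have P : forall i, f (iter i f B) = iter i f B \/ i < #|iter i.+1 f B|.
  elim=> [|i IH].
    case: (eqVneq (f B) B) => [->|ne]; [by left|right].
    rewrite /=.
    have : B \proper f B by rewrite properEneq eq_sym ne step_ext.
    by move/proper_card => h; lia.
  case: IH => [fx|lt].
    by left; rewrite /= fx fx.
  case: (eqVneq (f (iter i.+1 f B)) (iter i.+1 f B)) => [->|ne]; [by left|right].
  have : iter i.+1 f B \proper f (iter i.+1 f B)
    by rewrite properEneq eq_sym ne step_ext.
  move/proper_card => h; change (i.+1 < #|f (iter i.+1 f B)|); lia.
case: (P n) => // h; exfalso.
have := subset_leq_card (subsetT (iter n.+1 f B)); rewrite cardsT -/n; lia.
Qed.

Lemma closure_ext (T : finType) (e : rel T) a (B : {set T}) :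
  B \subset Defs.closure e a B.
Proof.
rewrite /Defs.closure; elim: #|T| => [|n IH] //; rewrite iterS.
apply: subset_trans IH _; exact: step_ext.
Qed.

Theorem proposition3p3 (T : finType) (e : rel T) (l k : nat)
    (B : {set T}) (L : {set T * T}) :
  simple_graph e ->
  1 <= l ->
  leaky_forcing_set e l.-1 B ->
  (forall p, p \in L -> e p.1 p.2) ->
  #|L| = k ->
  l <= k ->
  #|leaks_minus L (spec_closure e L B)| <= k - l.
Proof.
move=> _ l1 Hlk _ Lk lk.
set S := spec_closure e L B.
set M := [set p in L | p.1 \in S].
set X := [set p.1 | p in M].
have card : #|leaks_minus L S| + #|M| = k.
  rewrite -Lk -(cardsID [set p : T * T | p.1 \in S] L) addnC; congr (_ + _).
    by apply: eq_card => p; rewrite !inE andbC.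
  by apply: eq_card => p; rewrite !inE andbC.
have XM : #|X| <= #|M| := leq_imset_card _ _.
case: (leqP #|X| l.-1) => hX; last by lia.
have fixS : force_step e (fun u w => (u, w) \notin L) S = S by apply: closure_fix.
have sub : Defs.closure e (fun u _ => u \notin X) B \subset S.
  rewrite /Defs.closure; elim: #|T| => [|n IH] /=.
    exact: closure_ext.
  apply/subsetP => w; rewrite /force_step inE => /orP [/(subsetP IH) //|].
  rewrite inE => /existsP [u /and5P [uS' euw wS' uX /forallP Hv]].
  have uS := subsetP IH _ uS'.
  case: (boolP (w \in S)) => // wS.
  suff: w \in S by rewrite (negbTE wS).
  rewrite -{1}fixS /force_step inE; apply/orP; right; rewrite inE.
  apply/existsP; exists u; rewrite uS euw wS /=.
  apply/andP; split.
    apply/negP => uwL; move/negP: uX; apply.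
    by apply/imsetP; exists (u, w) => //; rewrite inE uwL uS.
  apply/forallP => v; apply/implyP => hv.
  by apply: (subsetP IH); move/implyP: (Hv v); apply.
have ST : S = [set: T].
  apply/eqP; rewrite eqEsubset subsetT /=.
  by rewrite -(Hlk X hX).
have -> : leaks_minus L S = set0.
  by apply/setP => p; rewrite /leaks_minus ST !inE andbF.
by rewrite cards0.
Qed.
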